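(* Let $A$ be a $d$-dimensional double permutation of order $n$, and suppose there is an integer $k$ with $2\le k\le d-1$ such that the support of every $k$-dimensional plane of $A$ and the support of every $(k+1)$-dimensional plane of $A$ is a connected bitrade. Then the support of $A$ is a connected bitrade.
   Context: A $d$-dimensional matrix of order $n$ is an array $A=(a_\alpha)_{\alpha\in I_n^d}$, $I_n^d=\{0,\dots,n-1\}^d$. A $k$-dimensional plane is obtained by fixing the values of $d-k$ coordinate positions and letting the other $k$ coordinates vary over $\{0,\dots,n-1\}$; a line is a $1$-dimensional plane. A double permutation is a polystochastic matrix (nonnegative, each line sums to $1$) all of whose entries lie in $\{0,1/2\}$. The support of a matrix (or plane) is the set of indices with nonzero entries; the support of a $k$-dimensional plane is regarded as a subset of a $k$-dimensional index set. A set $U$ of indices is a unitrade if every line contains either $0$ or $2$ elements of $U$. Consider the graph on $U$ in which two elements are adjacent iff they lie on a common line; $U$ is a bitrade if this graph is bipartite (equivalently there is $\sigma:U\to\{\pm1\}$ with $\sigma(\alpha)\ne\sigma(\beta)$ whenever $\alpha,\beta\in U$ lie on a common line), and $U$ is connected if this graph is connected. *)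

(* Defs.v *)
From HB Require Import structures.
From mathcomp Require Import all_boot all_order all_algebra.
Set Implicit Arguments. Unset Strict Implicit. Unset Printing Implicit Defensive.
Import Order.TTheory GRing.Theory Num.Theory.

Definition mindex (d n : nat) := {ffun 'I_d -> 'I_n}.

Section Defs.
Variables (d n : nat).

Definition line (i : 'I_d) (a : mindex d n) : {set mindex d n} :=
  [set b : mindex d n | [forall j, (j != i) ==> (b j == a j)]].

Definition unitrade (U : {set mindex d n}) : Prop :=
  forall (i : 'I_d) (a : mindex d n),
    #|line i a :&: U| = 0%N \/ #|line i a :&: U| = 2%N.

Definition adj (U : {set mindex d n}) : rel (mindex d n) :=
  fun a b => [&& a \in U, b \in U, a != b & [exists i, b \in line i a]].

(* U is a bitrade: a unitrade whose adjacency graph is bipartite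
   (sigma : U -> {+1,-1} encoded by bool) *)
Definition bitrade (U : {set mindex d n}) : Prop :=
  unitrade U /\
  exists sigma : mindex d n -> bool,
    forall a b, adj U a b -> sigma a != sigma b.

Definition connectedU (U : {set mindex d n}) : Prop :=
  {in U &, forall a b, connect (adj U) a b}.

Definition connected_bitrade (U : {set mindex d n}) : Prop :=
  bitrade U /\ connectedU U.

End Defs.

Local Open Scope ring_scope.

Definition supp (R : numDomainType) (d n : nat) (A : {ffun mindex d n -> R})
  : {set mindex d n} := [set a | A a != 0].

Definition double_permutation (R : numFieldType) (d n : nat)
  (A : {ffun mindex d n -> R}) : Prop :=
  (forall a, A a = 0 \/ A a = 2^-1) /\
  (forall (i : 'I_d) (a : mindex d n), \sum_(b in line i a) A b = 1).

(* k-dimensional plane: free coordinates f 0, ..., f (k-1) (f injective),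
   remaining coordinates fixed to those of alpha; plane_idx maps the
   k-dimensional mindex beta to the corresponding d-dimensional mindex. *)
Definition plane_idx (d n k : nat) (f : 'I_k -> 'I_d) (alpha : mindex d n)
  (beta : mindex k n) : mindex d n :=
  [ffun j => if [pick i | f i == j] is Some i then beta i else alpha j].

Definition plane (R : numDomainType) (d n k : nat) (A : {ffun mindex d n -> R})
  (f : 'I_k -> 'I_d) (alpha : mindex d n) : {ffun mindex k n -> R} :=
  [ffun beta => A (plane_idx f alpha beta)].

(* Main.v *)
Require Import Defs.
From HB Require Import structures.
From mathcomp Require Import all_boot all_order all_algebra.
From Stdlib Require Import ClassicalEpsilon.
From mathcomp Require Import lra.
Import Order.TTheory GRing.Theory Num.Theory.
Set Implicit Arguments. Unset Strict Implicit. Unset Printing Implicit Defensive.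

Lemma connect_map (T T' : finType) (e : rel T) (e' : rel T') (h : T -> T') x y :
  (forall a b, e a b -> e' (h a) (h b)) -> connect e x y -> connect e' (h x) (h y).
Proof.
move=> H /connectP [pth Hp ->]; elim: pth x Hp => [|z pth IH] x /=; first by rewrite connect0.
case/andP=> exz pz; exact: connect_trans (connect1 (H _ _ exz)) (IH _ pz).
Qed.

Lemma subset_card_ex (T : finType) (A : {set T}) m :
  m <= #|A| -> exists B : {set T}, B \subset A /\ #|B| = m.
Proof.
elim: m => [|m IH] Hm; first by exists set0; rewrite sub0set cards0.
have [B [sBA cB]] := IH (ltnW Hm).
have : B \proper A by rewrite properEcard sBA cB.
case/properP=> _ [a aA aB]; exists (a |: B); split.
  by rewrite subUset sub1set aA.
by rewrite cardsU1 aB cB.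
Qed.

Section Main.
Variables (d n k : nat).
Notation M := (mindex d n).
Variable U : {set M}.
Hypothesis U2 : forall i (a : M), #|line i a :&: U| = 2.
Hypothesis k2 : 2 <= k.

Definition pl (S : {set 'I_d}) (p : M) : {set M} :=
  [set y : M | [forall i, (i \notin S) ==> (y i == p i)]].

Definition adjP (P : {set M}) : rel M := fun a b => [&& adj U a b, a \in P & b \in P].

Definition valid (s : M -> bool) (P : {set M}) :=
  forall a b, a \in P -> b \in P -> adj U a b -> s a != s b.

Definition Conn (P : {set M}) := {in U :&: P &, forall a b, connect (adjP P) a b}.

Definition Good (S : {set 'I_d}) := forall p, (exists s, valid s (pl S p)) /\ Conn (pl S p).

Lemma plP (S : {set 'I_d}) (p y : M) : reflect (forall i, i \notin S -> y i = p i) (y \in pl S p).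
Proof.
rewrite inE; apply: (iffP forallP) => H i.
  by move=> iS; have /implyP/(_ iS)/eqP := H i.
by apply/implyP=> iS; rewrite H.
Qed.

Lemma lineP i (a b : M) : reflect (forall j, j != i -> b j = a j) (b \in line i a).
Proof.
rewrite inE; apply: (iffP forallP) => H j.
  by move=> ji; have /implyP/(_ ji)/eqP := H j.
by apply/implyP=> ji; rewrite H.
Qed.

Lemma lineU i (a : M) : exists2 q, q \in U & q \in line i a.
Proof.
have : 0 < #|line i a :&: U| by rewrite U2.
case/card_gt0P=> q; rewrite inE => /andP[ql qU]; by exists q.
Qed.

Lemma pl_self (S : {set 'I_d}) (p : M) : p \in pl S p.
Proof. by apply/plP. Qed.

Lemma pl_sub (B C : {set 'I_d}) (q p : M) : B \subset C -> q \in pl C p -> pl B q \subset pl C p.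
Proof.
move=> BC /plP Hq; apply/subsetP=> y /plP Hy; apply/plP=> i iC.
rewrite Hy ?Hq //; apply: contra iC; exact: (subsetP BC).
Qed.

Lemma line_pl i (S : {set 'I_d}) (p : M) : i \in S -> line i p \subset pl S p.
Proof.
move=> iS; apply/subsetP=> y /lineP Hy; apply/plP=> j jS; apply: Hy.
by apply: contraNneq jS => ->.
Qed.

Lemma valid_sub s (P P' : {set M}) : P' \subset P -> valid s P -> valid s P'.
Proof. by move=> sub H a b aP bP; apply: H; apply: (subsetP sub). Qed.

Lemma conn_lift (P P' : {set M}) (a b : M) : P' \subset P -> connect (adjP P') a b -> connect (adjP P) a b.
Proof.
move=> sub; apply: (connect_map (h := id)) => x y /and3P[H xP yP].
by rewrite /adjP H !(subsetP sub).
Qed.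

Lemma uniq_col (P : {set M}) s1 s2 (a b : M) : Conn P -> valid s1 P -> valid s2 P ->
  a \in U :&: P -> b \in U :&: P -> (s1 a == s2 a) = (s1 b == s2 b).
Proof.
move=> C V1 V2 aUP bUP; have := C _ _ aUP bUP.
move/connectP=> [pth Hp ->]; elim: pth a aUP Hp => [|z pth IH] a aUP //=.
move=> H; case/andP: H => H pz; case/and3P: H => az aP zP.
have zU : z \in U :&: P.
  apply/setIP; split => //. by move: az; rewrite /adj => /and4P[].
rewrite -(IH _ zU pz).
have := V1 _ _ aP zP az; have := V2 _ _ aP zP az.
by case: (s1 a); case: (s1 z); case: (s2 a); case: (s2 z).
Qed.


Lemma pl_layer (B : {set 'I_d}) j (p a b : M) : a \in pl (j |: B) p -> b \in pl (j |: B) p ->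
  a j = b j -> b \in pl B a.
Proof.
move/plP=> Ha /plP Hb abj; apply/plP=> i iB.
case: (eqVneq i j) => [->|ij]; first by [].
have iC : i \notin j |: B by rewrite !inE negb_or ij iB.
by rewrite (Ha i iC) (Hb i iC).
Qed.

Hypothesis HGk : forall S : {set 'I_d}, #|S| = k -> Good S.
Hypothesis HGk1 : forall S : {set 'I_d}, #|S| = k.+1 -> Good S.

Lemma step (S : {set 'I_d}) (j : 'I_d) : j \in S -> k < #|S :\ j| -> Good (S :\ j) -> Good S.
Proof.
move=> jS cS' GS' x.
set S' := S :\ j.
have jS' : j \notin S' by rewrite !inE eqxx.
have sS'S : S' \subset S by apply: subD1set.
have [B0 [B0S' cB0]] := subset_card_ex (ltnW cS').
have : 0 < #|B0| by rewrite cB0; apply: leq_trans k2.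
case/card_gt0P => s0 s0B0.
set Q := pl S x.
have jB0 : j \notin B0 by apply: contra jS'; apply: (subsetP B0S').
have cjB0 : #|j |: B0| = k.+1 by rewrite cardsU1 jB0 cB0.
have jB0S : j |: B0 \subset S by rewrite subUset sub1set jS (subset_trans B0S' sS'S).
pose z := fun v : 'I_n => ([ffun i => if i == j then v else x i] : M).
have Hlay : forall v, {s | valid s (pl S' (z v))}.
  move=> v; apply: constructive_indefinite_description; exact: (GS' (z v)).1.
have [sT VT] := (HGk1 cjB0 x).1.
set T0 := pl (j |: B0) x.
have Hq : forall v : 'I_n, {q | [/\ q \in U, q \in T0 & q j = v]}.
  move=> v; apply: constructive_indefinite_description.
  have [q qU ql] := lineU s0 (z v).
  exists q; split => //.
  - apply/plP => i; rewrite !inE negb_or => /andP[ij iB0].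
    move/lineP: ql => ->; last by apply: contraNneq iB0 => ->.
    by rewrite ffunE (negbTE ij).
  - move/lineP: ql => ->; first by rewrite ffunE eqxx.
    by apply: contraNneq jB0 => ->.
pose sig v := sval (Hlay v).
pose qv v := sval (Hq v).
pose e v := sig v (qv v) != sT (qv v).
pose Sig (y : M) := xorb (sig (y j) y) (e (y j)).
have LQ : forall y, y \in Q -> forall B : {set 'I_d}, B \subset S' -> pl B y \subset pl S' (z (y j)).
  move=> y yQ B BS; apply: pl_sub BS _; apply/plP => i iS.
  rewrite ffunE; case: (eqVneq i j) => [->|ij]; first by [].
  have iS0 : i \notin S by move: iS; rewrite !inE ij.
  by move/plP: yQ => ->.
have VL : forall v (P : {set M}), P \subset pl S' (z v) -> valid Sig P.
  move=> v P sub a b aP bP ab.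
  have aL := subsetP sub a aP; have bL := subsetP sub b bP.
  have aj : a j = v by move/plP: aL => ->; rewrite ?ffunE ?eqxx.
  have bj : b j = v by move/plP: bL => ->; rewrite ?ffunE ?eqxx.
  rewrite /Sig aj bj; have := svalP (Hlay v) a b aL bL ab.
  by rewrite -/(sig v); case: (sig v a); case: (sig v b); case: (e v).
have T0Q : T0 \subset Q by apply: pl_sub jB0S (pl_self _ _).
have B0sub : B0 \subset j |: B0 by apply/subsetP=> i iB; rewrite !inE iB orbT.
have validT0 : valid Sig T0.
  have eqT : forall y, y \in U -> y \in T0 -> Sig y = sT y.
    move=> y yU yT.
    have [qU qT qj] := svalP (Hq (y j)).
    have qP : qv (y j) \in pl B0 y by apply: pl_layer yT qT _; rewrite qj.
    have PT : pl B0 y \subset T0 by apply: pl_sub B0sub yT.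
    have PL := LQ y (subsetP T0Q y yT) B0 B0S'.
    have GB := HGk cB0 y.
    have yUP : y \in U :&: pl B0 y by rewrite inE yU pl_self.
    have qUP : qv (y j) \in U :&: pl B0 y by rewrite inE qU qP.
    have := uniq_col GB.2 (valid_sub PL (svalP (Hlay (y j)))) (valid_sub PT VT) yUP qUP.
    rewrite /Sig /e -/(sig (y j)) -/(qv (y j)).
    by case: (sig (y j) y); case: (sT y); case: (sig (y j) (qv (y j))); case: (sT (qv (y j))).
  move=> a b aT bT ab.
  have [aU bU] : a \in U /\ b \in U by move: ab; rewrite /adj => /and4P[].
  rewrite !eqT //; exact: VT.
have HProp : forall (p : M) (B B' C : {set 'I_d}) c, p \in Q -> B \subset S' -> B' \subset S' -> #|B'| = k ->
    C \subset B -> C \subset B' -> #|j |: C| = k -> c \in C ->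
    valid Sig (pl (j |: B) p) -> valid Sig (pl (j |: B') p).
  move=> p B B' C c pQ BS B'S cB' CB CB' cjC cC VB.
  have jB' : j \notin B' by apply: contra jS'; apply: (subsetP B'S).
  have cjB' : #|j |: B'| = k.+1 by rewrite cardsU1 jB' cB'.
  have [s2 V2] := (HGk1 cjB' p).1.
  set T2 := pl (j |: B') p. set R := pl (j |: C) p.
  have RT2 : R \subset T2 by apply: pl_sub (setUS _ CB') (pl_self _ _).
  have RT1 : R \subset pl (j |: B) p by apply: pl_sub (setUS _ CB) (pl_self _ _).
  have T2Q : T2 \subset Q.
    by apply: pl_sub _ pQ; rewrite subUset sub1set jS (subset_trans B'S sS'S).
  have cS1 : c \in S' by apply: (subsetP B'S); apply: (subsetP CB').
  have cjC' : c \in j |: C by rewrite !inE cC orbT.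
  have [r0 r0U r0l] := lineU c p.
  have r0R : r0 \in R by apply: (subsetP (line_pl p cjC')).
  have GR := HGk cjC p.
  have VR : valid Sig R := valid_sub RT1 VB.
  have B'sub : B' \subset j |: B' by apply/subsetP=> i iB; rewrite !inE iB orbT.
  have key : forall y, y \in U -> y \in T2 -> (Sig y == s2 y) = (Sig r0 == s2 r0).
    move=> y yU yT.
    pose w : M := [ffun i => if i == j then y j else p i].
    have [r rU rl] := lineU c w.
    have cj : c != j by apply: contraNneq jS' => <-.
    have rR : r \in R.
      apply/plP => i; rewrite !inE negb_or => /andP[ij iC].
      move/lineP: rl => ->; last by apply: contraNneq iC => ->.
      by rewrite ffunE (negbTE ij).
    have rj : r j = y j.
      by move/lineP: rl => ->; [rewrite ffunE eqxx | rewrite eq_sym].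
    have rP : r \in pl B' y by apply: pl_layer yT (subsetP RT2 r rR) _; rewrite rj.
    have PT2 : pl B' y \subset T2 by apply: pl_sub B'sub yT.
    have PL := LQ y (subsetP T2Q y yT) B' B'S.
    have GB' := HGk cB' y.
    have yUP : y \in U :&: pl B' y by rewrite inE yU pl_self.
    have rUP : r \in U :&: pl B' y by rewrite inE rU rP.
    rewrite (uniq_col GB'.2 (VL _ _ PL) (valid_sub PT2 V2) yUP rUP).
    apply: (uniq_col GR.2 VR (valid_sub RT2 V2)); by rewrite inE ?rU ?r0U ?rR ?r0R.
  move=> a b aT bT ab.
  have [aU bU] : a \in U /\ b \in U by move: ab; rewrite /adj => /and4P[].
  move: (key a aU aT) (key b bU bT) (V2 a b aT bT ab).
  case: (Sig r0 == s2 r0); case: (Sig a); case: (Sig b); case: (s2 a); by case: (s2 b).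
have px : forall p : M, [set i | p i != x i] = set0 -> p = x.
  move=> p H0; apply/ffunP => i; apply/eqP; apply: contraT => hi.
  have : i \in [set i | p i != x i] by rewrite inE.
  by rewrite H0 inE.
have Reach : forall m (p : M), #|[set i | p i != x i]| <= m -> p \in Q ->
    valid Sig (pl (j |: B0) p).
  elim=> [|m IH] p.
    by rewrite leqn0 cards_eq0 => /eqP/px -> _.
  move=> Hm pQ.
  have [H0|/set0Pn [c]] := eqVneq [set i | p i != x i] set0; first by rewrite (px _ H0).
  rewrite inE => pc.
  pose p0 : M := [ffun i => if i == c then x c else p i].
  have p0Q : p0 \in Q.
    apply/plP => i iS; rewrite ffunE; case: (eqVneq i c) => [->|_] //.
    by move/plP: pQ => ->.
  have Hpr : [set i | p0 i != x i] \proper [set i | p i != x i].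
    apply/properP; split.
      apply/subsetP => i; rewrite !inE ffunE.
      by case: (eqVneq i c) => [->|_]; rewrite ?eqxx.
    by exists c; rewrite !inE ?ffunE ?eqxx.
  have lt : #|[set i | p0 i != x i]| <= m by rewrite -ltnS (leq_trans (proper_card Hpr) Hm).
  have IH0 := IH p0 lt p0Q.
  have pp0 : forall C : {set 'I_d}, c \in C -> p \in pl C p0.
    move=> C cC; apply/plP => i iC; rewrite ffunE.
    by case: (eqVneq i c) => [ic|//]; rewrite ic cC in iC.
  have cS : c \in S.
    apply: contraT => cnS; move/plP: pQ => /(_ c cnS) pcx.
    by rewrite pcx eqxx in pc.
  case: (boolP (c \in j |: B0)) => cjB.
    by apply: valid_sub IH0; apply: pl_sub (subxx _) (pp0 _ cjB).
  move: cjB; rewrite !inE negb_or => /andP[cj cnB0].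
  have cS1 : c \in S' by rewrite !inE cj cS.
  pose C := B0 :\ s0. pose B1 := c |: C.
  have CB0 : C \subset B0 by apply: subD1set.
  have CB1 : C \subset B1 by apply/subsetP=> i iC; apply/setU1P; right.
  have B1S' : B1 \subset S' by rewrite subUset sub1set cS1 (subset_trans CB0 B0S').
  have cC : #|C| = k.-1 by move: cB0; rewrite (cardsD1 s0) s0B0 => <-.
  have jC : j \notin C by apply: contra jB0; apply: (subsetP CB0).
  have cjC : #|j |: C| = k by rewrite cardsU1 jC cC add1n prednK // ltnW.
  have cnC : c \notin C by apply: contra cnB0; apply: (subsetP CB0).
  have cB1 : #|B1| = k by rewrite cardsU1 cnC cC add1n prednK // ltnW.
  have : 0 < #|C| by rewrite cC -ltnS prednK // ltnW.
  case/card_gt0P => c' c'C.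
  have V1 := HProp p0 B0 B1 C c' p0Q B0S' B1S' cB1 CB0 CB1 cjC c'C IH0.
  have cjB1 : c \in j |: B1 by apply/setU1P; right; apply/setU1P; left.
  have V1p : valid Sig (pl (j |: B1) p).
    by apply: valid_sub V1; apply: pl_sub (subxx _) (pp0 _ cjB1).
  exact: HProp p B1 B0 C c' pQ B1S' B0S' cB0 CB1 CB0 cjC c'C V1p.
split.
  exists Sig => a b aQ bQ ab.
  case: (eqVneq (a j) (b j)) => abj.
    apply: (VL (a j) (pl S' a)) => //.
    - exact: LQ a aQ S' (subxx _).
    - exact: pl_self.
    - apply/plP => i iS; case: (eqVneq i j) => [->|ij] //.
      have iS0 : i \notin S by move: iS; rewrite !inE ij.
      by move/plP: bQ => /(_ i iS0) ->; move/plP: aQ => /(_ i iS0) ->.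
  move: (ab); rewrite /adj => /and4P[_ _ _ /existsP[i bl]].
  case: (eqVneq i j) => [ij|ij]; last first.
    have ji : j != i by rewrite eq_sym.
    by move/lineP: bl => /(_ j ji) bj; rewrite bj eqxx in abj.
  subst i.
  apply: (Reach _ a (leqnn _) aQ) => //; first exact: pl_self.
  by apply: (subsetP (line_pl a _)) bl; rewrite !inE eqxx.
move=> a b /setIP[aU aQ] /setIP[bU bQ].
pose w : M := [ffun i => if i == j then b j else a i].
have [r rU rl] := lineU s0 w.
have js0 : j != s0 by apply: contraNneq jB0 => ->.
have rT : r \in pl (j |: B0) a.
  apply/plP => i; rewrite !inE negb_or => /andP[ij iB0].
  move/lineP: rl => ->; last by apply: contraNneq iB0 => ->.
  by rewrite ffunE (negbTE ij).
have s0S' : s0 \in S' by apply: (subsetP B0S').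
have rL : r \in pl S' b.
  apply/plP => i iS.
  have is0 : i != s0 by apply: contraNneq iS => ->.
  move/lineP: rl => /(_ i is0) ->; rewrite ffunE.
  case: (eqVneq i j) => [->|ij] //.
  have iS0 : i \notin S by move: iS; rewrite !inE ij.
  by move/plP: bQ => /(_ i iS0) ->; move/plP: aQ => /(_ i iS0) ->.
have TQ : pl (j |: B0) a \subset Q by apply: pl_sub jB0S aQ.
have LQ' : pl S' b \subset Q by apply: pl_sub sS'S bQ.
apply: connect_trans.
  apply: (conn_lift TQ); apply: ((HGk1 cjB0 a).2 a r); by rewrite inE ?aU ?rU ?pl_self ?rT.
apply: (conn_lift LQ'); apply: ((GS' b).2 r b); by rewrite inE ?bU ?rU ?pl_self ?rL.
Qed.

Lemma allGood m : forall S : {set 'I_d}, #|S| = (k.+1 + m)%N -> Good S.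
Proof.
elim: m => [|m IH] S cS; first by apply: HGk1; rewrite addn0 in cS.
have : 0 < #|S| by rewrite cS addnS.
case/card_gt0P => j jS.
have cS' : #|S :\ j| = (k.+1 + m)%N.
  by move: cS; rewrite (cardsD1 j) jS add1n addnS => /eqP; rewrite eqSS => /eqP.
apply: (step jS); last exact: IH.
by rewrite cS'; apply: leq_addr.
Qed.

End Main.


Lemma good_of_planes (R : numDomainType) d n kk (A : {ffun mindex d n -> R}) :
  (forall (f : 'I_kk -> 'I_d) (alpha : mindex d n), injective f ->
      connected_bitrade (supp (plane A f alpha))) ->
  forall S : {set 'I_d}, #|S| = kk -> Good (supp A) S.
Proof.
move=> H S cS p.
pose g (i : 'I_kk) : 'I_d := enum_val (cast_ord (esym cS) i).
have ginj : injective g by move=> i1 i2 /enum_val_inj/cast_ord_inj.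
have gS : forall i, g i \in S by move=> i; apply: enum_valP.
have Sg : forall i, i \in S -> exists i', g i' = i.
  move=> i iS; exists (cast_ord cS (enum_rank_in iS i)).
  by rewrite /g cast_ordK enum_rankK_in.
have [[_ [sk Vk]] Ck] := H g p ginj.
pose emb := plane_idx g p.
pose proj (a : mindex d n) : mindex kk n := [ffun i => a (g i)].
have embg : forall b i, emb b (g i) = b i.
  move=> b i; rewrite /emb /plane_idx ffunE; case: pickP => [i' /eqP /ginj -> //|/(_ i)].
  by rewrite eqxx.
have embP : forall b, emb b \in pl S p.
  move=> b; apply/plP => i iS; rewrite /emb /plane_idx ffunE; case: pickP => [i' /eqP gi|//].
  by rewrite -gi gS in iS.
have embK : forall a, a \in pl S p -> emb (proj a) = a.
  move=> a aP; apply/ffunP=> i; case: (boolP (i \in S)) => iS.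
    by have [i' <-] := Sg i iS; rewrite embg ffunE.
  by move/plP: (embP (proj a)) => /(_ i iS) ->; move/plP: aP => /(_ i iS) ->.
have projK : forall b, proj (emb b) = b by move=> b; apply/ffunP=> i; rewrite ffunE embg.
have suppE : forall b, (b \in supp (plane A g p)) = (A (emb b) != 0%R).
  by move=> b; rewrite !inE ffunE.
split.
  exists (fun a => sk (proj a)) => a b aP bP ab; apply: Vk.
  move: ab; rewrite /adj => /and4P[aU bU anb /existsP[i bl]].
  rewrite inE in aU; rewrite inE in bU.
  apply/and4P; split.
  - by rewrite suppE embK.
  - by rewrite suppE embK.
  - by apply: contra anb => /eqP e; rewrite -(embK _ aP) -(embK _ bP) e.
  case: (boolP (i \in S)) => iS; last first.
    have ba : b = a.
      apply/ffunP => j; case: (eqVneq j i) => [->|ji]; last by move/lineP: bl => ->.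
      by move/plP: bP => /(_ i iS) ->; move/plP: aP => /(_ i iS) ->.
    by rewrite ba eqxx in anb.
  have [i' gi] := Sg i iS.
  apply/existsP; exists i'; apply/lineP => j' j'i; rewrite !ffunE.
  move/lineP: bl => -> //; rewrite -gi; apply: contra j'i => /eqP/ginj ->; exact: eqxx.
move=> a b /setIP[aU aP] /setIP[bU bP].
rewrite inE in aU; rewrite inE in bU.
have := Ck (proj a) (proj b).
rewrite !suppE !embK // => /(_ aU bU) Hc.
rewrite -(embK _ aP) -(embK _ bP).
apply: (connect_map _ Hc) => b1 g1 /and4P[b1s g1s neq /existsP[i' gl]].
rewrite /adjP !embP !andbT; apply/and4P; split.
- by rewrite inE -suppE.
- by rewrite inE -suppE.
- by apply: contra neq => /eqP e; rewrite -(projK b1) -(projK g1) e.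
apply/existsP; exists (g i'); apply/lineP => j ji.
rewrite /emb /plane_idx !ffunE; case: pickP => [i0 /eqP gi0|//].
move/lineP: gl => -> //; apply: contraNneq ji => e; by rewrite -gi0 e.
Qed.

Local Open Scope ring_scope.

Lemma U2_of (R : realFieldType) d n (A : {ffun mindex d n -> R}) :
  double_permutation A -> forall i a, #|line i a :&: supp A| = 2%N.
Proof.
move=> [H01 Hsum] i a.
have := Hsum i a.
rewrite (bigID (fun b => b \in supp A)) /= [X in _ + X]big1 ?addr0; last first.
  by move=> b /andP[_]; rewrite inE negbK => /eqP.
rewrite (eq_bigr (fun=> 2^-1)); last first.
  by move=> b /andP[_]; rewrite inE; case: (H01 b) => ->; rewrite ?eqxx.
rewrite (eq_bigl (fun b => b \in line i a :&: supp A)); last by move=> b; rewrite !inE.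
rewrite GRing.sumr_const -[2^-1 *+ _]mulr_natr => h.
have n2 : (2 : R) != 0 by rewrite pnatr_eq0.
have h2 : (#|line i a :&: supp A|%:R : R) = 2%:R.
  move: h; set c := (#|line i a :&: supp A|%:R : R); lra.
by apply/eqP; rewrite -(eqr_nat R) h2.
Qed.

Theorem mainTheorem4 (R : realFieldType) (d n k : nat)
  (A : {ffun mindex d n -> R}) :
  double_permutation A ->
  (2 <= k)%N -> (k <= d.-1)%N ->
  (forall (f : 'I_k -> 'I_d) (alpha : mindex d n), injective f ->
      connected_bitrade (supp (plane A f alpha))) ->
  (forall (f : 'I_k.+1 -> 'I_d) (alpha : mindex d n), injective f ->
      connected_bitrade (supp (plane A f alpha))) ->
  connected_bitrade (supp A).
Proof.
move=> DP k2 kd H1 H2.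
have U2 := U2_of DP.
have HGk := good_of_planes H1; have HGk1 := good_of_planes H2.
have kd' : (k < d)%N.
  move: kd; case: (d) => [|d'] /=; last by rewrite ltnS.
  by rewrite leqn0 => /eqP k0; rewrite k0 in k2.
have dk : #|[set: 'I_d]| = (k.+1 + (d - k.+1))%N by rewrite cardsT card_ord subnKC.
have G := allGood U2 k2 HGk HGk1 dk.
have plT : forall x y : mindex d n, y \in pl [set: 'I_d] x by move=> x y; apply/plP => i; rewrite inE.
split; first split.
  by move=> i a; right; exact: U2.
  case: (pickP (fun _ : mindex d n => true)) => [x _|H0]; last first.
    by exists (fun _ => true) => a; have := H0 a.
  have [[s Vs] _] := G x; exists s => a b ab; exact: Vs.
move=> a b aU bU; have [_ C] := G a.
have aP : a \in supp A :&: pl [set: 'I_d] a by rewrite in_setI aU plT.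
have bP : b \in supp A :&: pl [set: 'I_d] a by rewrite in_setI bU plT.
have := C a b aP bP.
by apply: (connect_map (h := id)) => x y /and3P[].
Qed.
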